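(* The Markov spectrum of $\mathbb{Q}((1/T))$ is $\mathcal{M}=\{1,2,3,\dots\}\cup\{\infty\}$.
   Context: $\mathbb{Q}((1/T))$ is the field of formal Laurent series $\sum_{i=-\infty}^m a_iT^i$ with $a_i\in\mathbb{Q}$. For nonzero $\alpha$ with leading term $a_mT^m$, $a_m\ne0$, set $\deg\alpha=m$, and $\deg0=-\infty$. A binary quadratic form over $\mathbb{Q}((1/T))$ is $Q(X,Y)=AX^2+BXY+CY^2$ with $A,B,C\in\mathbb{Q}((1/T))$ not all in $\mathbb{Q}(T)$; its discriminant is $D=B^2-4AC$. It is indefinite if $D\neq0$ and $D$ is a square in $\mathbb{Q}((1/T))$. Put $m(Q)=\inf\{\deg Q(X,Y): X,Y\in\mathbb{Q}[T],\ (X,Y)\ne(0,0)\}\in\mathbb{Z}\cup\{-\infty\}$. The Markov spectrum is $\mathcal{M}=\{\tfrac{\deg D}{2}-m(Q): Q \text{ an indefinite binary quadratic form}\}$, where the value is $+\infty$ when $m(Q)=-\infty$. *)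

(* Defs.v *)
From HB Require Import structures.
From mathcomp Require Import all_boot all_order all_algebra.
Set Implicit Arguments. Unset Strict Implicit. Unset Printing Implicit Defensive.
Import Order.TTheory GRing.Theory Num.Theory.
Local Open Scope ring_scope.

(* A formal Laurent series sum_{i <= bnd} coef i T^i over Q, with an explicit
   upper bound on the support. Equality of series is [eqLS] (coefficientwise). *)
Record LS := mkLS {
  coef : int -> rat;
  bnd : int;
  bndP : forall i : int, bnd < i -> coef i = 0 }.

Definition eqLS (x y : LS) : Prop := forall i, coef x i = coef y i.

Program Definition LSadd (a b : LS) : LS :=
  @mkLS (fun i => coef a i + coef b i) (Num.max (bnd a) (bnd b)) _.
Next Obligation.
move=> a b i /=; rewrite gt_max => /andP[ha hb].
by rewrite (bndP ha) (bndP hb) addr0.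
Qed.

Program Definition LSopp (a : LS) : LS := @mkLS (fun i => - coef a i) (bnd a) _.
Next Obligation. by move=> a i H /=; rewrite (bndP H) oppr0. Qed.

Program Definition LSscale (c : rat) (a : LS) : LS :=
  @mkLS (fun i => c * coef a i) (bnd a) _.
Next Obligation. by move=> c a i H /=; rewrite (bndP H) mulr0. Qed.

(* Cauchy product: coefficient n is sum over i + j = n with i <= bnd a, j <= bnd b. *)
Program Definition LSmul (a b : LS) : LS :=
  @mkLS (fun n => if n <= bnd a + bnd b then
           \sum_(k < (absz (bnd a + bnd b - n)%R).+1)
              coef a (bnd a - k%:Z) * coef b (n - bnd a + k%:Z)
         else 0) (bnd a + bnd b) _.
Next Obligation. by move=> a b i H /=; rewrite leNgt H. Qed.

Program Definition ofpoly (p : {poly rat}) : LS :=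
  @mkLS (fun i => match i with Posz n => p`_n | Negz _ => 0 end) (size p)%:Z _.
Next Obligation.
move=> p i H /=; case: i H => // n; rewrite ltz_nat => H.
by rewrite nth_default // ltnW.
Qed.

Definition in_QT (a : LS) : Prop :=
  exists q p : {poly rat}, q != 0 /\ eqLS (LSmul (ofpoly q) a) (ofpoly p).

(* is_deg a d : the degree of a is d, with None standing for -infinity. *)
Definition is_deg (a : LS) (d : option int) : Prop :=
  match d with
  | None => forall i, coef a i = 0
  | Some m => coef a m != 0 /\ forall i, m < i -> coef a i = 0
  end.

Definition qval (A B C : LS) (X Y : {poly rat}) : LS :=
  LSadd (LSadd (LSmul A (LSmul (ofpoly X) (ofpoly X)))
               (LSmul B (LSmul (ofpoly X) (ofpoly Y))))
        (LSmul C (LSmul (ofpoly Y) (ofpoly Y))).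

Definition disc (A B C : LS) : LS :=
  LSadd (LSmul B B) (LSopp (LSscale 4 (LSmul A C))).

(* binary quadratic form over Q((1/T)): not all of A, B, C in Q(T) *)
Definition is_form (A B C : LS) : Prop := ~ (in_QT A /\ in_QT B /\ in_QT C).

Definition indefinite (A B C : LS) : Prop :=
  (exists i, coef (disc A B C) i != 0) /\
  exists s : LS, eqLS (LSmul s s) (disc A B C).

(* markov_value A B C v : deg D / 2 - m(Q) = v, where v = None means +infinity
   (i.e. m(Q) = -infinity) and m(Q) is the infimum in Z u {-oo} of
   deg Q(X,Y) over (X,Y) <> (0,0) in Q[T]^2. *)
Definition markov_value (A B C : LS) (v : option rat) : Prop :=
  match v with
  | None => forall k : int, exists X Y : {poly rat}, (X != 0 \/ Y != 0) /\
              forall i, k <= i -> coef (qval A B C X Y) i = 0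
  | Some r => exists dD m : int,
      is_deg (disc A B C) (Some dD) /\
      r = dD%:~R / 2 - m%:~R /\
      (exists X Y : {poly rat}, (X != 0 \/ Y != 0) /\ is_deg (qval A B C X Y) (Some m)) /\
      (forall X Y : {poly rat}, (X != 0 \/ Y != 0) ->
          exists d : int, is_deg (qval A B C X Y) (Some d) /\ m <= d)
  end.

Definition markov_spectrum (v : option rat) : Prop :=
  exists A B C : LS, is_form A B C /\ indefinite A B C /\ markov_value A B C v.

(* Main.v *)
Require Import Defs.
From HB Require Import structures.
From mathcomp Require Import all_boot all_order all_algebra.
From mathcomp Require Import zify ring lra.
Set Implicit Arguments. Unset Strict Implicit. Unset Printing Implicit Defensive.
Import Order.TTheory GRing.Theory Num.Theory.
Local Open Scope ring_scope.
From Stdlib Require Import Classical.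

Lemma sum_zero_tail (h : int -> rat) (U : int) (L0 L : nat) :
  (L0 <= L)%N -> (forall k : nat, (L0 <= k)%N -> h (U - k%:Z) = 0) ->
  \sum_(k < L) h (U - k%:Z) = \sum_(k < L0) h (U - k%:Z).
Proof.
move=> le H; rewrite -(subnKC le); elim: (L - L0)%N => [|d IH]; first by rewrite addn0.
by rewrite addnS big_ord_recr /= IH H ?addr0 // leq_addr.
Qed.

Lemma sum_canon (h : int -> rat) (lo hi U : int) (L : nat) :
  (forall i, i < lo -> h i = 0) -> (forall i, hi < i -> h i = 0) ->
  lo <= hi + 1 -> hi <= U -> U - L%:Z < lo ->
  \sum_(k < L) h (U - k%:Z) = \sum_(k < absz (hi + 1 - lo)%R) h (hi - k%:Z).
Proof.
move=> Hlo Hhi Hlh.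
have [d Hd] : exists d : nat, d = absz (U - hi) by exists (absz (U - hi)).
elim: d U L Hd => [|d IH] U L Hd HU HL.
  have -> : U = hi by lia.
  apply: sum_zero_tail; first by lia.
  move=> k Hk; apply: Hlo; lia.
case: L HL => [|L] HL; first by lia.
rewrite big_ord_recl /= Hhi ?add0r; last by lia.
have -> : \sum_(i < L) h (U - (bump 0 i)%:Z) = \sum_(i < L) h ((U - 1) - i%:Z).
  by apply: eq_bigr => i _; congr h; rewrite /bump /=; lia.
apply: IH; lia.
Qed.

Lemma sum_window (h : int -> rat) (lo hi U1 U2 : int) (L1 L2 : nat) :
  (forall i, i < lo -> h i = 0) -> (forall i, hi < i -> h i = 0) ->
  hi <= U1 -> U1 - L1%:Z < lo -> hi <= U2 -> U2 - L2%:Z < lo ->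
  \sum_(k < L1) h (U1 - k%:Z) = \sum_(k < L2) h (U2 - k%:Z).
Proof.
move=> Hlo Hhi H1 H1' H2 H2'.
case: (lerP lo (hi + 1)) => Hlh.
  by rewrite (sum_canon Hlo Hhi) // (sum_canon Hlo Hhi).
have h0 : forall i, h i = 0.
  move=> i; case: (ltrP i lo) => Hi; first exact: Hlo.
  apply: Hhi; lia.
by rewrite !big1 // => i _; rewrite h0.
Qed.

Definition zab (a : LS) (N : int) := forall i, N < i -> coef a i = 0.

Lemma zab_bnd a : zab a (bnd a).
Proof. by move=> i; apply: bndP. Qed.

Lemma coef_mul_window a b N M (j : nat) : zab a N -> zab b M ->
  coef (LSmul a b) (N + M - j%:Z) =
  \sum_(i < j.+1) coef a (N - i%:Z) * coef b (M - (j%:Z - i%:Z)).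
Proof.
move=> Ha Hb.
set n := N + M - j%:Z.
pose h := fun i => coef a i * coef b (n - i).
have -> : \sum_(i < j.+1) coef a (N - i%:Z) * coef b (M - (j%:Z - i%:Z)) =
          \sum_(i < j.+1) h (N - i%:Z).
  by apply: eq_bigr => i _; rewrite /h; congr (_ * coef b _); rewrite /n; lia.
rewrite /LSmul /=.
case: ifP => Hn.
  have -> : \sum_(k < (absz (bnd a + bnd b - n)%R).+1) coef a (bnd a - k%:Z) * coef b (n - bnd a + k%:Z)
           = \sum_(k < (absz (bnd a + bnd b - n)%R).+1) h (bnd a - k%:Z).
    by apply: eq_bigr => i _; rewrite /h; congr (_ * coef b _); lia.
  apply: (@sum_window h (Num.max (n - M) (n - bnd b)) (Num.min N (bnd a))).
  - move=> i Hi; rewrite /h; case: (ltrP i (n - M)) => Hi'.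
      by rewrite Hb ?mulr0 //; lia.
    by rewrite (@bndP b) ?mulr0 //; move: Hi; rewrite lt_max => /orP [] ?; lia.
  - move=> i Hi; rewrite /h; move: Hi; rewrite gt_min => /orP [Hi|Hi].
      by rewrite Ha ?mul0r.
    by rewrite bndP ?mul0r.
  - by rewrite ge_min lexx orbT.
  - by rewrite lt_max; apply/orP; right; lia.
  - by rewrite ge_min lexx.
  - by rewrite lt_max; apply/orP; left; lia.
rewrite big1 // => i _; rewrite /h.
case: (lerP (N - i%:Z) (bnd a)) => Hi.
  by rewrite (@bndP b) ?mulr0 //; move/negbT: Hn; rewrite -ltNge; lia.
by rewrite bndP ?mul0r.
Qed.

Lemma coef_mul_zab a b N M : zab a N -> zab b M -> zab (LSmul a b) (N + M).
Proof.
move=> Ha Hb n Hn; rewrite /LSmul /=; case: ifP => // _.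
rewrite big1 // => i _.
case: (lerP (bnd a - i%:Z) N) => Hi.
  by rewrite Hb ?mulr0 //; lia.
by rewrite Ha ?mul0r.
Qed.


Lemma coef_mul_gen a b n lo hi U (L : nat) :
  (forall i, i < lo -> coef a i * coef b (n - i) = 0) ->
  (forall i, hi < i -> coef a i * coef b (n - i) = 0) ->
  hi <= U -> U - L%:Z < lo ->
  coef (LSmul a b) n = \sum_(k < L) coef a (U - k%:Z) * coef b (n - (U - k%:Z)).
Proof.
move=> Hlo Hhi HU HL.
pose h := fun i => coef a i * coef b (n - i).
have -> : \sum_(k < L) coef a (U - k%:Z) * coef b (n - (U - k%:Z)) = \sum_(k < L) h (U - k%:Z) by [].
case: (lerP n (bnd a + bnd b)) => Hn.
  have [j Hj] : exists j : nat, n = bnd a + bnd b - j%:Z.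
    by exists (absz (bnd a + bnd b - n)%R); lia.
  rewrite Hj coef_mul_window; [|exact: zab_bnd|exact: zab_bnd].
  have -> : \sum_(i < j.+1) coef a (bnd a - i%:Z) * coef b (bnd b - (j%:Z - i%:Z))
           = \sum_(i < j.+1) h (bnd a - i%:Z).
    by apply: eq_bigr => i _; rewrite /h; congr (_ * coef b _); lia.
  apply: (@sum_window h (Num.max lo (n - bnd b)) (Num.min hi (bnd a))).
  - move=> i; rewrite lt_max => /orP [Hi|Hi]; first exact: Hlo.
    by rewrite /h (@bndP b) ?mulr0 //; lia.
  - move=> i; rewrite gt_min => /orP [Hi|Hi]; first exact: Hhi.
    by rewrite /h bndP ?mul0r.
  - by rewrite ge_min lexx orbT.
  - by rewrite lt_max; apply/orP; right; lia.
  - by rewrite ge_min HU.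
  - by rewrite lt_max HL.
have -> : coef (LSmul a b) n = 0 by rewrite /LSmul /= leNgt Hn.
rewrite big1 // => i _; rewrite /h.
case: (lerP (U - i%:Z) (bnd a)) => Hi.
  by rewrite (@bndP b) ?mulr0 //; lia.
by rewrite bndP ?mul0r.
Qed.

Lemma coef_ofpolyN (p : {poly rat}) (i : int) : i < 0 -> coef (ofpoly p) i = 0.
Proof. by case: i. Qed.

Lemma coef_ofpolyP (p : {poly rat}) (k : nat) : coef (ofpoly p) k%:Z = p`_k.
Proof. by []. Qed.

Lemma coef_mul_polyr a (X : {poly rat}) n (L : nat) : (size X <= L)%N ->
  coef (LSmul a (ofpoly X)) n = \sum_(k < L) coef a (n - k%:Z) * X`_k.
Proof.
move=> HL.
rewrite (@coef_mul_gen _ _ n (n - L%:Z + 1) n n L).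
- apply: eq_bigr => k _; congr (_ * _).
  by have -> : n - (n - k%:Z) = k%:Z by lia.
- move=> i Hi.
  have [k Hk] : exists k : nat, n - i = k%:Z by exists (absz (n - i)%R); lia.
  rewrite Hk coef_ofpolyP nth_default ?mulr0 //.
  apply: leq_trans HL _; lia.
- by move=> i Hi; rewrite coef_ofpolyN ?mulr0 //; lia.
- by [].
- lia.
Qed.

Lemma ofpoly_mul (p q : {poly rat}) : eqLS (ofpoly (p * q)) (LSmul (ofpoly p) (ofpoly q)).
Proof.
move=> n; case: (ltrP n 0) => Hn.
  rewrite coef_ofpolyN // (@coef_mul_gen _ _ n 0 n n 0%N) ?big_ord0 //.
  - by move=> i Hi; rewrite coef_ofpolyN ?mul0r.
  - by move=> i Hi; rewrite (@coef_ofpolyN q) ?mulr0 //; lia.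
  - lia.
have [m ->] : exists m : nat, n = m%:Z by exists (absz n); lia.
rewrite coef_ofpolyP coefMr (@coef_mul_gen _ _ m 0 m m m.+1).
- apply: eq_bigr => i _; have Hk : (i <= m)%N by rewrite -ltnS.
  rewrite (subzn Hk) coef_ofpolyP; congr (_ * _).
  by have -> : m%:Z - (m - i)%N%:Z = (nat_of_ord i)%:Z by rewrite -subzn //; lia.
- by move=> i Hi; rewrite coef_ofpolyN ?mul0r.
- by move=> i Hi; rewrite (@coef_ofpolyN q) ?mulr0 //; lia.
- by [].
- lia.
Qed.

Lemma ofpoly_add (p q : {poly rat}) : eqLS (ofpoly (p + q)) (LSadd (ofpoly p) (ofpoly q)).
Proof. by case=> [n|n] /=; rewrite ?coefD ?addr0. Qed.

Lemma ofpoly_opp (p : {poly rat}) : eqLS (ofpoly (- p)) (LSopp (ofpoly p)).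
Proof. by case=> [n|n] /=; rewrite ?coefN ?oppr0. Qed.

Lemma ofpoly_scale c (p : {poly rat}) : eqLS (ofpoly (c *: p)) (LSscale c (ofpoly p)).
Proof. by case=> [n|n] /=; rewrite ?coefZ ?mulr0. Qed.

Lemma deg_exists a : (exists i, coef a i != 0) -> exists d, is_deg a (Some d).
Proof.
case=> i Hi.
have exP : exists k : nat, coef a (i + k%:Z) != 0 by exists 0%N; rewrite addr0.
have bdP : forall k : nat, coef a (i + k%:Z) != 0 -> (k <= absz (bnd a - i))%N.
  move=> k Hk; case: (lerP (i + k%:Z) (bnd a)) => H; first lia.
  by rewrite bndP // eqxx in Hk.
case: (ex_maxnP exP bdP) => k Hk Hmax.
exists (i + k%:Z); split => // j Hj.
have [k' Hk'] : exists k' : nat, j = i + k'%:Z by exists (absz (j - i)%R); lia.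
apply/eqP; apply: contraT => Hnz.
have := Hmax k'; rewrite -Hk' => /(_ Hnz); lia.
Qed.

Lemma deg_uniq a d1 d2 : is_deg a (Some d1) -> is_deg a (Some d2) -> d1 = d2.
Proof.
move=> [H1 Z1] [H2 Z2]; case: (ltgtP d1 d2) => // H.
  by rewrite Z1 ?eqxx in H2.
by rewrite Z2 ?eqxx in H1.
Qed.

Lemma coef_mul_top a b da db : zab a da -> zab b db ->
  coef (LSmul a b) (da + db) = coef a da * coef b db.
Proof.
move=> Ha Hb; have := coef_mul_window 0 Ha Hb.
by rewrite subr0 big_ord1 /= !subr0.
Qed.

Lemma deg_mul a b da db : is_deg a (Some da) -> is_deg b (Some db) ->
  is_deg (LSmul a b) (Some (da + db)).
Proof.
move=> [Ha Za] [Hb Zb]; split; last exact: coef_mul_zab.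
by rewrite coef_mul_top // mulf_neq0.
Qed.

Definition eqK (K : nat) (p q : {poly rat}) := forall j, (j < K)%N -> p`_j = q`_j.

Lemma eqK_refl K p : eqK K p p. Proof. by []. Qed.
Lemma eqK_sym K p q : eqK K p q -> eqK K q p. Proof. by move=> H j Hj; rewrite H. Qed.
Lemma eqK_trans K p q r : eqK K p q -> eqK K q r -> eqK K p r.
Proof. by move=> H1 H2 j Hj; rewrite H1 // H2. Qed.

Lemma eqK_sub K p q : eqK K (p - q) 0 -> eqK K p q.
Proof. by move=> H j Hj; move: (H j Hj); rewrite coefB coef0 => /eqP; rewrite subr_eq0 => /eqP. Qed.

Lemma eqK_mul0 K p r : eqK K p 0 -> eqK K (p * r) 0.
Proof.
move=> H j Hj; rewrite coef0 coefM big1 // => [[i Hi]] _ /=.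
by rewrite H ?coef0 ?mul0r //; apply: leq_ltn_trans Hj; rewrite -ltnS.
Qed.

Lemma eqK_eq K p q r : p - q = r -> eqK K r 0 -> eqK K p q.
Proof. by move=> <-; apply: eqK_sub. Qed.

Definition Rep (N : int) (K : nat) (a : LS) (p : {poly rat}) :=
  zab a N /\ forall j : nat, (j < K)%N -> coef a (N - j%:Z) = p`_j.

Definition tr (N : int) (K : nat) (a : LS) : {poly rat} := \poly_(j < K) coef a (N - j%:Z).

Lemma rep_atom N K a : zab a N -> Rep N K a (tr N K a).
Proof. by move=> H; split => // j Hj; rewrite coef_poly Hj. Qed.

Lemma rep_add N K a b p q : Rep N K a p -> Rep N K b q -> Rep N K (LSadd a b) (p + q).
Proof.
move=> [Ha Hp] [Hb Hq]; split.
  by move=> i Hi /=; rewrite Ha ?Hb ?addr0.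
by move=> j Hj /=; rewrite Hp ?Hq ?coefD.
Qed.

Lemma rep_opp N K a p : Rep N K a p -> Rep N K (LSopp a) (- p).
Proof.
move=> [Ha Hp]; split; first by move=> i Hi /=; rewrite Ha ?oppr0.
by move=> j Hj /=; rewrite Hp ?coefN.
Qed.

Lemma rep_scale N K c a p : Rep N K a p -> Rep N K (LSscale c a) (c *: p).
Proof.
move=> [Ha Hp]; split; first by move=> i Hi /=; rewrite Ha ?mulr0.
by move=> j Hj /=; rewrite Hp ?coefZ.
Qed.

Lemma rep_mul N M K a b p q : Rep N K a p -> Rep M K b q -> Rep (N + M) K (LSmul a b) (p * q).
Proof.
move=> [Ha Hp] [Hb Hq]; split; first exact: coef_mul_zab.
move=> j Hj; rewrite coef_mul_window // coefM; apply: eq_bigr => [[i Hi]] _ /=.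
have Hij : (i <= j)%N by rewrite -ltnS.
rewrite Hp; last by apply: leq_ltn_trans Hj.
rewrite (subzn Hij) Hq //; apply: leq_ltn_trans Hj; exact: leq_subr.
Qed.

Lemma rep_eq N K a b p : eqLS a b -> Rep N K a p -> Rep N K b p.
Proof.
move=> E [Ha Hp]; split; first by move=> i Hi; rewrite -E Ha.
by move=> j Hj; rewrite -E Hp.
Qed.

Lemma rep_congr N K a p q : Rep N K a p -> eqK K p q -> Rep N K a q.
Proof. by move=> [Ha Hp] E; split => // j Hj; rewrite Hp ?E. Qed.

Lemma rep_uniq N K a p q : Rep N K a p -> Rep N K a q -> eqK K p q.
Proof. by move=> [_ Hp] [_ Hq] j Hj; rewrite -Hp ?Hq. Qed.

Lemma rep_zab N K a p : Rep N K a p -> zab a N. Proof. by case. Qed.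

Lemma rep_eqLS a b :
  (forall (i : int), exists N (K : nat) p q, N - K%:Z < i /\ Rep N K a p /\ Rep N K b q /\ eqK K p q) ->
  eqLS a b.
Proof.
move=> H i; have [N [K [p [q [Hi [[Ha Hp] [[Hb Hq] E]]]]]]] := H i.
case: (lerP i N) => HiN; last by rewrite Ha ?Hb.
have [j Hj] : exists j : nat, i = N - j%:Z by exists (absz (N - i)%R); lia.
rewrite Hj Hp ?Hq ?E //; lia.
Qed.

Lemma zab_mono a N M : zab a N -> N <= M -> zab a M.
Proof. by move=> H NM i Hi; apply: H; apply: le_lt_trans Hi. Qed.

Lemma zab_ofpoly (p : {poly rat}) N : (size p)%:Z <= N -> zab (ofpoly p) N.
Proof. by move=> H; apply: zab_mono H; exact: zab_bnd. Qed.


Lemma ker_nonzero m n (A : 'M[rat]_(m, n)) : (n < m)%N -> exists w : 'rV_m, w != 0 /\ w *m A = 0.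
Proof.
move=> Hnm.
have Hk : kermx A != 0.
  rewrite -mxrank_eq0 mxrank_ker; have := rank_leq_col A; lia.
have [i Hi] : exists i, row i (kermx A) != 0.
  apply/existsP; apply: contraT; rewrite negb_exists => /forallP H.
  move: Hk; apply: contraNT => _; apply/eqP/row_matrixP => i.
  by rewrite row0; apply/eqP; move: (H i); rewrite negbK.
by exists (row i (kermx A)); split => //; rewrite -row_mul mulmx_ker row0.
Qed.

Lemma zab_ofpoly' (p : {poly rat}) (L : nat) : (size p <= L)%N -> zab (ofpoly p) (L%:Z - 1).
Proof.
move=> H i Hi; have [k Hk] : exists k : nat, i = k%:Z by exists (absz i); lia.
by rewrite Hk coef_ofpolyP nth_default //; apply: leq_trans H _; lia.
Qed.

Lemma coef_LSadd a b n : coef (LSadd a b) n = coef a n + coef b n.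
Proof. by []. Qed.

Lemma dirichlet (u v : LS) (du V : int) (N2 : nat) : zab u du -> zab v V -> du <= V -> (0 < N2)%N ->
  exists X Y : {poly rat}, (X != 0 \/ Y != 0) /\ (size Y <= N2)%N /\
    zab (LSadd (LSmul u (ofpoly X)) (LSmul v (ofpoly Y))) (du - N2%:Z).
Proof.
move=> Hu Hv HdV HN2.
pose e := absz (V - du).
pose N1 := (e + N2)%N.
pose R := (N1 + N2).-1.
pose top := V + N2%:Z - 1.
pose Mu := \matrix_(k < N1, r < R) coef u (top - r%:Z - k%:Z).
pose Mv := \matrix_(k < N2, r < R) coef v (top - r%:Z - k%:Z).
have HR : (R < N1 + N2)%N by rewrite /R /N1; lia.
have [w [Hw0 Hw]] := @ker_nonzero _ _ (col_mx Mu Mv) HR.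
pose X := \poly_(k < N1) oapp (fun i : 'I_N1 => lsubmx w 0 i) 0 (insub k).
pose Y := \poly_(k < N2) oapp (fun i : 'I_N2 => rsubmx w 0 i) 0 (insub k).
exists X, Y; split; [|split].
- suff : ~~ ((X == 0) && (Y == 0)) by rewrite negb_and => /orP.
  apply/negP => /andP [/eqP HX /eqP HY].
  move: Hw0; rewrite -(hsubmxK w).
  have -> : lsubmx w = 0.
    apply/rowP => k; have := congr1 (fun p : {poly rat} => p`_k) HX.
    by rewrite /X coef_poly ltn_ord valK /= coef0 !mxE.
  have -> : rsubmx w = 0.
    apply/rowP => k; have := congr1 (fun p : {poly rat} => p`_k) HY.
    by rewrite /Y coef_poly ltn_ord valK /= coef0 !mxE.
  by rewrite row_mx0 eqxx.
- exact: size_poly.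
have HX : (size X <= N1)%N by exact: size_poly.
have HY : (size Y <= N2)%N by exact: size_poly.
move=> n Hn; rewrite coef_LSadd.
have Z1 : zab (LSmul u (ofpoly X)) (du + (N1%:Z - 1)).
  by apply: coef_mul_zab => //; exact: zab_ofpoly'.
have Z2 : zab (LSmul v (ofpoly Y)) (V + (N2%:Z - 1)).
  by apply: coef_mul_zab => //; exact: zab_ofpoly'.
case: (lerP n top) => Hnt; last first.
  rewrite Z1 ?Z2 ?addr0 //; rewrite /top /N1 /e in Hnt; lia.
have [r Hr] : exists r : nat, n = top - r%:Z by exists (absz (top - n)%R); lia.
have HrR : (r < R)%N by rewrite /R /N1 /e; rewrite /top in Hr; lia.
have := congr1 (fun M : 'M[rat]_(1, R) => M 0 (Ordinal HrR)) Hw.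
rewrite -{1}(hsubmxK w) mul_row_col !mxE.
rewrite (coef_mul_polyr _ _ HX) (coef_mul_polyr _ _ HY) Hr => H; rewrite -[RHS]H.
congr (_ + _); apply: eq_bigr => k _; rewrite !mxE coef_poly ltn_ord valK mulrC /=.
  by rewrite mxE.
by rewrite mxE.
Qed.


Lemma coef0_mul_l a b : (forall i, coef a i = 0) -> forall n, coef (LSmul a b) n = 0.
Proof.
move=> H n; rewrite /LSmul /=; case: ifP => // _.
by rewrite big1 // => i _; rewrite H mul0r.
Qed.

Lemma coef0_mul_r a b : (forall i, coef b i = 0) -> forall n, coef (LSmul a b) n = 0.
Proof.
move=> H n; rewrite /LSmul /=; case: ifP => // _.
by rewrite big1 // => i _; rewrite H mulr0.
Qed.

Lemma coef_ofpoly0 i : coef (ofpoly 0) i = 0.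
Proof. by case: i => [n|n] //=; rewrite coef0. Qed.

Lemma eqK_sub0 K p q : eqK K p q -> eqK K (p - q) 0.
Proof. by move=> H j Hj; rewrite coefB coef0 H // subrr. Qed.

Definition L1 A B s X Y :=
  LSadd (LSmul (LSscale 2 A) (ofpoly X)) (LSmul (LSadd B (LSopp s)) (ofpoly Y)).

Lemma ident1 A B C s X Y : eqLS (LSmul s s) (disc A B C) ->
  eqLS (LSmul (L1 A B s X Y) (LSadd (L1 A B s X Y) (LSmul (LSscale 2 s) (ofpoly Y))))
       (LSscale 4 (LSmul A (qval A B C X Y))).
Proof.
move=> Hs; apply: rep_eqLS => i.
pose N0 : int := (absz (bnd A) + absz (bnd B) + absz (bnd C) + absz (bnd s) + size X + size Y)%N%:Z.
have zA : zab A N0 by apply: zab_mono (@zab_bnd A) _; rewrite /N0; lia.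
have zB : zab B N0 by apply: zab_mono (@zab_bnd B) _; rewrite /N0; lia.
have zC : zab C N0 by apply: zab_mono (@zab_bnd C) _; rewrite /N0; lia.
have zs : zab s N0 by apply: zab_mono (@zab_bnd s) _; rewrite /N0; lia.
have zX : zab (ofpoly X) N0 by apply: zab_ofpoly; rewrite /N0; lia.
have zY : zab (ofpoly Y) N0 by apply: zab_ofpoly; rewrite /N0; lia.
pose N := (N0 + N0) + (N0 + N0).
pose K := (absz (N - i)%R).+1.
have rA := rep_atom K zA; have rB := rep_atom K zB; have rC := rep_atom K zC.
have rs := rep_atom K zs; have rX := rep_atom K zX; have rY := rep_atom K zY.
have r1 := rep_add (rep_mul (rep_scale 2 rA) rX) (rep_mul (rep_add rB (rep_opp rs)) rY).
have r2 := rep_add r1 (rep_mul (rep_scale 2 rs) rY).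
have rl := rep_mul r1 r2.
have rq := rep_add (rep_add (rep_mul rA (rep_mul rX rX)) (rep_mul rB (rep_mul rX rY)))
                   (rep_mul rC (rep_mul rY rY)).
have rr := rep_scale 4 (rep_mul rA rq).
have eN : N0 + (N0 + (N0 + N0)) = N by rewrite /N; lia.
rewrite eN in rr.
have rss := rep_mul rs rs.
have rd := rep_add (rep_mul rB rB) (rep_opp (rep_scale 4 (rep_mul rA rC))).
have E := rep_uniq rd (rep_eq Hs rss).
exists N, K; eexists; eexists; split; first by rewrite /K; lia.
split; first exact: rl.
split; first exact: rr.
apply: eqK_eq; last first.
  apply: (eqK_mul0 (tr N0 K (ofpoly Y) * tr N0 K (ofpoly Y))).
  exact: eqK_sub0 E.
rewrite -!mul_polyC; ring.
Qed.


Lemma coef_LSscale c a n : coef (LSscale c a) n = c * coef a n.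
Proof. by []. Qed.

Lemma is_deg_eq a b d : eqLS a b -> is_deg a (Some d) -> is_deg b (Some d).
Proof. by move=> E [H1 H2]; split; [rewrite -E | move=> i Hi; rewrite -E H2]. Qed.

Lemma zab_add a b N : zab a N -> zab b N -> zab (LSadd a b) N.
Proof. by move=> Ha Hb i Hi; rewrite coef_LSadd Ha ?Hb ?addr0. Qed.

Lemma zab_scale c a N : zab a N -> zab (LSscale c a) N.
Proof. by move=> Ha i Hi /=; rewrite Ha ?mulr0. Qed.

Lemma zab_opp a N : zab a N -> zab (LSopp a) N.
Proof. by move=> Ha i Hi /=; rewrite Ha ?oppr0. Qed.

Lemma exists_nz a : ~ (forall i, coef a i = 0) -> exists i, coef a i != 0.
Proof.
move=> H; apply: NNPP => H'; apply: H => i; apply: NNPP => Hi; apply: H'.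
by exists i; apply/eqP.
Qed.

Lemma dir1 A B C r : indefinite A B C -> markov_value A B C (Some r) ->
  exists n : nat, (0 < n)%N /\ r = n%:R.
Proof.
move=> [[i0 Hi0] [s Hs]] [dD [m [HdD [Hr [_ Hall]]]]].
have [i1 Hi1] : exists i, coef A i != 0.
  apply: exists_nz => HA.
  have [d [[Hd _] _]] := Hall 1 0 (or_introl (oner_neq0 _)).
  move: Hd; rewrite /qval !coef_LSadd coef0_mul_l //.
  rewrite (@coef0_mul_r B) ?(@coef0_mul_r C) ?add0r ?eqxx //.
    by apply: coef0_mul_r => j; exact: coef_ofpoly0.
  by apply: coef0_mul_r => j; exact: coef_ofpoly0.
have [i2 Hi2] : exists i, coef s i != 0.
  apply: exists_nz => Hs0.
  by move: Hi0; rewrite -Hs coef0_mul_l ?eqxx.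
have [dA [HA ZA]] := deg_exists (ex_intro _ i1 Hi1).
have [ds Hds] := deg_exists (ex_intro _ i2 Hi2).
have HD2 := is_deg_eq Hs (deg_mul Hds Hds).
have EdD := deg_uniq HdD HD2.
case: Hds => Hs1 Zs.
pose V := Num.max dA (Num.max (bnd B) ds).
pose N2 := (absz (dA - ds)%R).+1.
have zu : zab (LSscale 2 A) dA by exact: zab_scale.
have zv : zab (LSadd B (LSopp s)) V.
  apply: zab_add; first by apply: zab_mono (@zab_bnd B) _; rewrite /V !le_max lexx orbT.
  by apply: zab_opp; apply: zab_mono Zs _; rewrite /V !le_max lexx !orbT.
have HdV : dA <= V by rewrite /V le_max lexx.
have [X [Y [HXY [HYs ZL1]]]] := @dirichlet _ _ _ _ N2 zu zv HdV (ltn0Sn _).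
have ZL2 : zab (LSadd (L1 A B s X Y) (LSmul (LSscale 2 s) (ofpoly Y))) (ds + (N2%:Z - 1)).
  apply: zab_add.
    by apply: zab_mono ZL1 _; rewrite /N2; lia.
  by apply: coef_mul_zab; [exact: zab_scale | exact: zab_ofpoly'].
have ZP := coef_mul_zab ZL1 ZL2.
have [d [[Hd0 Hd1] Hmd]] := Hall X Y HXY.
have Htop := @coef_mul_top A (qval A B C X Y) dA d ZA Hd1.
have Hnz : coef (LSscale 4 (LSmul A (qval A B C X Y))) (dA + d) != 0.
  by rewrite coef_LSscale Htop !mulf_neq0.
move: Hnz; rewrite -(ident1 X Y Hs) => Hnz.
have Hd : d <= ds - 1.
  case: (lerP (dA + d) (dA - N2%:Z + (ds + (N2%:Z - 1)))) => H; first lia.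
  by rewrite ZP ?eqxx in Hnz.
exists (absz (ds - m)%R); split; first lia.
rewrite Hr EdD natr_absz ger0_norm; last lia.
by rewrite intrD intrB; field.
Qed.


Fixpoint sqseq (g : nat -> rat) (k : nat) : seq rat :=
  if k is k'.+1 then
    let l := sqseq g k' in
    rcons l ((g k'.+1 - \sum_(i < k') l`_i.+1 * l`_(k'.+1 - i.+1)) / 2)
  else [:: 1].

Definition sqf g j := (sqseq g j)`_j.

Lemma size_sqseq g k : size (sqseq g k) = k.+1.
Proof. by elim: k => //= k IH; rewrite size_rcons IH. Qed.

Lemma sqseq_nth g k i : (i <= k)%N -> (sqseq g k)`_i = sqf g i.
Proof.
elim: k i => [|k IH] i Hi; first by case: i Hi.
case: (ltnP i k.+1) => H.
  by rewrite /= nth_rcons size_sqseq H IH.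
by have -> : i = k.+1 by lia.
Qed.

Lemma sqf_rec g k : sqf g k.+1 = (g k.+1 - \sum_(i < k) sqf g i.+1 * sqf g (k.+1 - i.+1)) / 2.
Proof.
rewrite {1}/sqf /= nth_rcons size_sqseq ltnn eqxx; congr ((_ - _) / 2).
by apply: eq_bigr => i _; rewrite !sqseq_nth //; have := ltn_ord i; lia.
Qed.

Lemma sqf_conv g : g 0%N = 1 -> forall k, \sum_(i < k.+1) sqf g i * sqf g (k - i) = g k.
Proof.
move=> g0 [|k]; first by rewrite big_ord1 /= /sqf /= mulr1.
rewrite big_ord_recl big_ord_recr /=.
have E : \sum_(i < k) sqf g (bump 0 (widen_ord (leqnSn k) i)) * sqf g (k.+1 - bump 0 (widen_ord (leqnSn k) i))
       = \sum_(i < k) sqf g i.+1 * sqf g (k.+1 - i.+1) by apply: eq_bigr.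
rewrite E /bump /= subnn subn0.
have -> : sqf g 0 = 1 by [].
rewrite mul1r mulr1 sqf_rec.
set S := \sum_(i < k) _.
by field.
Qed.

Program Definition sqLS (g : nat -> rat) (n : int) : LS :=
  @mkLS (fun z => if z <= n then sqf g (absz (n - z)%R) else 0) n _.
Next Obligation. by rewrite leNgt H. Qed.

Lemma sqLS_sq g n : g 0%N = 1 -> forall j : nat,
  coef (LSmul (sqLS g n) (sqLS g n)) (n + n - j%:Z) = g j.
Proof.
move=> g0 j; rewrite coef_mul_window; [|exact: (@zab_bnd (sqLS g n))|exact: (@zab_bnd (sqLS g n))].
rewrite -(sqf_conv g0 j); apply: eq_bigr => i _ /=.
have Hi := ltn_ord i.
rewrite ifT; last lia.
rewrite ifT; last lia.
congr (sqf g _ * sqf g _); lia.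
Qed.

Lemma sqLS_deg g n : is_deg (sqLS g n) (Some n).
Proof.
split; last exact: (@zab_bnd (sqLS g n)).
by rewrite /= lexx subrr.
Qed.

Definition cpol (n : nat) : {poly rat} := 'X^(n + n) - 1.

Lemma size_cpol n : (0 < n)%N -> size (cpol n) = (n + n).+1.
Proof. by move=> Hn; rewrite /cpol -polyC1 size_XnsubC //; lia. Qed.

Lemma cpol_top n : (0 < n)%N -> (cpol n)`_(n + n) = 1.
Proof. by move=> Hn; rewrite /cpol coefB coefXn coef1 eqxx (_ : (n + n == 0)%N = false) ?subr0 //; lia. Qed.

Definition gc (n : nat) (j : nat) : rat := coef (ofpoly (cpol n)) (n%:Z + n%:Z - j%:Z).

Definition sigma (n : nat) : LS := sqLS (gc n) n%:Z.

Lemma gc0 n : (0 < n)%N -> gc n 0 = 1.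
Proof.
move=> Hn; rewrite /gc subr0.
have -> : n%:Z + n%:Z = (n + n)%N%:Z by lia.
by rewrite coef_ofpolyP cpol_top.
Qed.

Lemma zab_cpol n : (0 < n)%N -> zab (ofpoly (cpol n)) (n%:Z + n%:Z).
Proof.
move=> Hn; apply: zab_mono (zab_ofpoly' (leqnn (size (cpol n)))) _.
rewrite size_cpol //; lia.
Qed.

Lemma sigma_sq n : (0 < n)%N -> eqLS (LSmul (sigma n) (sigma n)) (ofpoly (cpol n)).
Proof.
move=> Hn z; case: (lerP z (n%:Z + n%:Z)) => Hz.
  have [j ->] : exists j : nat, z = n%:Z + n%:Z - j%:Z by exists (absz (n%:Z + n%:Z - z)%R); lia.
  by rewrite sqLS_sq // gc0.
rewrite zab_cpol // (@coef_mul_zab _ _ n n) //; exact: (@zab_bnd (sigma n)).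
Qed.

Lemma sigma_deg n : is_deg (sigma n) (Some n%:Z).
Proof. exact: sqLS_deg. Qed.

Lemma cpol_deg n : (0 < n)%N -> is_deg (ofpoly (cpol n)) (Some (n%:Z + n%:Z)).
Proof.
move=> Hn; split; last exact: zab_cpol.
have -> : n%:Z + n%:Z = (n + n)%N%:Z by lia.
by rewrite coef_ofpolyP cpol_top // oner_neq0.
Qed.

Lemma aniso n : (0 < n)%N -> forall X Y : {poly rat},
  X * X - cpol n * (Y * Y) = 0 -> X = 0 /\ Y = 0.
Proof.
move=> Hn.
suff H : forall k (X Y : {poly rat}), (size X + size Y <= k)%N -> X * X - cpol n * (Y * Y) = 0 -> X = 0 /\ Y = 0.
  by move=> X Y; apply: (H _ X Y (leqnn _)).
elim=> [|k IH] X Y Hk E.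
  by split; apply/eqP; rewrite -size_poly_eq0; lia.
have E0 := congr1 (fun p => p.[0]) E.
move: E0; rewrite /= /cpol !hornerE expr0n /=.
have -> : (n + n == 0)%N = false by lia.
rewrite /= => E0.
have hx : X.[0] = 0 by nra.
have hy : Y.[0] = 0 by nra.
have [X1 HX1] : exists X1, X = X1 * 'X.
  have /factor_theorem [q Hq] : root X 0 by rewrite /root hx.
  by exists q; rewrite Hq polyC0 subr0.
have [Y1 HY1] : exists Y1, Y = Y1 * 'X.
  have /factor_theorem [q Hq] : root Y 0 by rewrite /root hy.
  by exists q; rewrite Hq polyC0 subr0.
have E1 : (X1 * X1 - cpol n * (Y1 * Y1)) * ('X * 'X) = 0.
  by rewrite -E HX1 HY1; ring.
move/eqP: E1; rewrite mulf_eq0 mulf_eq0 polyX_eq0 !orbF => /eqP E1.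
have HXs : (size X1 <= size X)%N.
  case: (eqVneq X1 0) => [->|nz]; first by rewrite size_poly0.
  by rewrite HX1 size_mulX.
have HYs : (size Y1 <= size Y)%N.
  case: (eqVneq Y1 0) => [->|nz]; first by rewrite size_poly0.
  by rewrite HY1 size_mulX.
have Hlt : (size X1 + size Y1 < size X + size Y)%N \/ (X = 0 /\ Y = 0).
  case: (eqVneq X 0) => HX0; case: (eqVneq Y 0) => HY0; [by right| | |].
  - left; have nz : Y1 != 0 by apply/eqP => Y10; move/eqP: HY0; rewrite HY1 Y10 mul0r.
    have : size Y = (size Y1).+1 by rewrite HY1 size_mulX.
    lia.
  - left; have nz : X1 != 0 by apply/eqP => X10; move/eqP: HX0; rewrite HX1 X10 mul0r.
    have : size X = (size X1).+1 by rewrite HX1 size_mulX.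
    lia.
  - left; have nz : X1 != 0 by apply/eqP => X10; move/eqP: HX0; rewrite HX1 X10 mul0r.
    have : size X = (size X1).+1 by rewrite HX1 size_mulX.
    lia.
case: Hlt => [Hlt|//].
have [A1 B1] := IH X1 Y1 ltac:(lia) E1.
by rewrite HX1 HY1 A1 B1 !mul0r.
Qed.


Lemma eqLS_sym a b : eqLS a b -> eqLS b a. Proof. by move=> E i; rewrite E. Qed.

Lemma coef_LSopp a n : coef (LSopp a) n = - coef a n. Proof. by []. Qed.

Lemma rep_shift N K a p (t : nat) : Rep N K a p -> Rep (N + t%:Z) K a ('X^t * p).
Proof.
move=> [Ha Hp]; split; first by apply: zab_mono Ha _; lia.
move=> j Hj; rewrite coefXnM; case: ifP => Hjt.
  by rewrite Ha //; lia.
have -> : N + t%:Z - j%:Z = N - (j - t)%N%:Z by rewrite -subzn; lia.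
by rewrite Hp //; apply: leq_ltn_trans Hj; exact: leq_subr.
Qed.

Lemma rep_base N M K a p : Rep N K a p -> N = M -> Rep M K a p.
Proof. by move=> H <-. Qed.

Lemma rep_zero N K a : (forall i, coef a i = 0) -> Rep N K a 0.
Proof. by move=> H; split => [i _|j _]; rewrite H ?coef0. Qed.

Lemma ofpoly_sub (p q : {poly rat}) : eqLS (ofpoly (p - q)) (LSadd (ofpoly p) (LSopp (ofpoly q))).
Proof. by case=> [n|n] /=; rewrite ?coefB ?oppr0 ?addr0. Qed.

Lemma rep_ofpoly_mul N M K p q P Q : Rep N K (ofpoly p) P -> Rep M K (ofpoly q) Q ->
  Rep (N + M) K (ofpoly (p * q)) (P * Q).
Proof. by move=> H1 H2; apply: rep_eq (eqLS_sym (ofpoly_mul p q)) (rep_mul H1 H2). Qed.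

Lemma rep_ofpoly_sub N K p q P Q : Rep N K (ofpoly p) P -> Rep N K (ofpoly q) Q ->
  Rep N K (ofpoly (p - q)) (P - Q).
Proof. by move=> H1 H2; apply: rep_eq (eqLS_sym (ofpoly_sub p q)) (rep_add H1 (rep_opp H2)). Qed.

Lemma eqK_add0 K p q : eqK K p 0 -> eqK K q 0 -> eqK K (p + q) 0.
Proof. by move=> H1 H2 j Hj; rewrite coefD H1 ?H2 ?coef0 ?addr0. Qed.

Lemma eqK_mul0l K p r : eqK K p 0 -> eqK K (r * p) 0.
Proof. by move=> H; rewrite mulrC; apply: eqK_mul0. Qed.

Lemma ident2 (sg : LS) (X Y cP : {poly rat}) :
  eqLS (qval sg (ofpoly 0) (LSopp (LSmul sg (ofpoly cP))) X Y)
       (LSmul sg (ofpoly (X * X - cP * (Y * Y)))).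
Proof.
apply: rep_eqLS => i.
pose N0 : nat := (absz (bnd sg) + size X + size Y + size cP)%N.
have zs : zab sg N0 by apply: zab_mono (@zab_bnd sg) _; rewrite /N0; lia.
have zX : zab (ofpoly X) N0 by apply: zab_ofpoly; rewrite /N0; lia.
have zY : zab (ofpoly Y) N0 by apply: zab_ofpoly; rewrite /N0; lia.
have zc : zab (ofpoly cP) N0 by apply: zab_ofpoly; rewrite /N0; lia.
pose N : int := N0%:Z + (N0%:Z + (N0%:Z + N0%:Z)).
pose K := (absz (N - i)%R).+1.
have rs := rep_atom K zs; have rX := rep_atom K zX; have rY := rep_atom K zY.
have rc := rep_atom K zc.
have r0 : Rep N0 K (ofpoly 0) 0 by apply: rep_zero; exact: coef_ofpoly0.
have t1 := rep_base (rep_shift N0 (rep_mul rs (rep_mul rX rX))) (_ : _ = N).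
have t2 := rep_base (rep_shift N0 (rep_mul r0 (rep_mul rX rY))) (_ : _ = N).
have t3 := rep_base (rep_mul (rep_opp (rep_mul rs rc)) (rep_mul rY rY)) (_ : _ = N).
have rl := rep_add (rep_add (t1 ltac:(rewrite /N; lia)) (t2 ltac:(rewrite /N; lia)))
                   (t3 ltac:(rewrite /N; lia)).
have u1 := rep_base (rep_shift N0 (rep_ofpoly_mul rX rX)) (_ : _ = N0%:Z + (N0%:Z + N0%:Z)).
have u2 := rep_ofpoly_sub (u1 ltac:(lia)) (rep_ofpoly_mul rc (rep_ofpoly_mul rY rY)).
have rr := rep_mul rs u2.
exists N, K; eexists; eexists; split; first by rewrite /K; lia.
split; first exact: rl.
split; first exact: rr.
apply: (@eqK_eq _ _ _ 0); last by move=> j _.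
rewrite mul0r; ring.
Qed.

Lemma irr_alg (a b c d : {poly rat}) (N : nat) :
  'X^(N + N) * (a * a) - 'X^N * (c * (b * b)) =
  ('X^N * a - b * d) * ('X^N * a + b * d) + b * b * (d * d - 'X^N * c).
Proof. rewrite exprD; ring. Qed.

Lemma irr n : (0 < n)%N -> ~ in_QT (sigma n).
Proof.
move=> Hn [q [p [Hq E]]].
suff HP : p * p - cpol n * (q * q) = 0.
  by have [_ /eqP] := aniso Hn HP; rewrite (negbTE Hq).
have E2 : eqLS (ofpoly (p * p - cpol n * (q * q))) (ofpoly 0).
  apply: rep_eqLS => i.
  pose N0 : nat := (absz (bnd (sigma n)) + size p + size q + size (cpol n))%N.
  have zs : zab (sigma n) N0 by apply: zab_mono (@zab_bnd (sigma n)) _; rewrite /N0; lia.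
  have zp : zab (ofpoly p) N0 by apply: zab_ofpoly; rewrite /N0; lia.
  have zq : zab (ofpoly q) N0 by apply: zab_ofpoly; rewrite /N0; lia.
  have zc : zab (ofpoly (cpol n)) N0 by apply: zab_ofpoly; rewrite /N0; lia.
  pose N : int := N0%:Z + (N0%:Z + (N0%:Z + N0%:Z)).
  pose K := (absz (N - i)%R).+1.
  have rs := rep_atom K zs; have rp := rep_atom K zp; have rq := rep_atom K zq.
  have rc := rep_atom K zc.
  have r0 : Rep N K (ofpoly 0) 0 by apply: rep_zero; exact: coef_ofpoly0.
  have t1 := rep_base (rep_shift (N0 + N0) (rep_ofpoly_mul rp rp)) (_ : _ = N).
  have t2 := rep_base (rep_shift N0 (rep_ofpoly_mul rc (rep_ofpoly_mul rq rq))) (_ : _ = N).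
  have rl := rep_ofpoly_sub (t1 ltac:(rewrite /N; lia)) (t2 ltac:(rewrite /N; lia)).
  have E1 := rep_uniq (rep_eq E (rep_mul rq rs)) (rep_shift N0 rp).
  have E3 := rep_uniq (rep_eq (sigma_sq Hn) (rep_mul rs rs)) (rep_shift N0 rc).
  exists N, K; eexists; eexists; split; first by rewrite /K; lia.
  split; first exact: rl.
  split; first exact: r0.
  apply: eqK_sub; rewrite subr0.
  rewrite (irr_alg _ _ _ (tr N0 K (sigma n))).
  apply: eqK_add0.
    by apply: eqK_mul0; apply: eqK_sub0; apply: eqK_sym.
  by apply: eqK_mul0l; apply: eqK_sub0.
apply/polyP => k; have := E2 k%:Z.
by rewrite !coef_ofpolyP coef0.
Qed.


Lemma deg_ofpoly (P : {poly rat}) : P != 0 -> is_deg (ofpoly P) (Some ((size P).-1)%:Z).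
Proof.
move=> HP; split.
  by rewrite coef_ofpolyP -lead_coefE lead_coef_eq0.
have := zab_ofpoly' (leqnn (size P)).
have : (0 < size P)%N by rewrite size_poly_gt0.
move=> H1 H2; apply: zab_mono H2 _; lia.
Qed.

Lemma ident3_alg (xs xc : {poly rat}) (N0 : nat) :
  'X^N0 * (2 *: xc * (2 *: xc)) - ('X^N0 * (0 * 0) + - (4 *: (xs * - (xs * xc)))) =
  4%:R * xc * ('X^N0 * xc - xs * xs).
Proof. rewrite -!mul_polyC; ring. Qed.

Lemma ident3 n : (0 < n)%N ->
  eqLS (LSmul (LSscale 2 (ofpoly (cpol n))) (LSscale 2 (ofpoly (cpol n))))
       (disc (sigma n) (ofpoly 0) (LSopp (LSmul (sigma n) (ofpoly (cpol n))))).
Proof.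
move=> Hn; apply: rep_eqLS => i.
pose N0 : nat := (absz (bnd (sigma n)) + size (cpol n))%N.
have zs : zab (sigma n) N0 by apply: zab_mono (@zab_bnd (sigma n)) _; rewrite /N0; lia.
have zc : zab (ofpoly (cpol n)) N0 by apply: zab_ofpoly; rewrite /N0; lia.
pose N : int := N0%:Z + (N0%:Z + N0%:Z).
pose K := (absz (N - i)%R).+1.
have rs := rep_atom K zs; have rc := rep_atom K zc.
have r0 : Rep N0 K (ofpoly 0) 0 by apply: rep_zero; exact: coef_ofpoly0.
have rl := rep_base (rep_shift N0 (rep_mul (rep_scale 2 rc) (rep_scale 2 rc))) (_ : _ = N).
have t1 := rep_base (rep_shift N0 (rep_mul r0 r0)) (_ : _ = N).
have rr := rep_add (t1 ltac:(rewrite /N; lia))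
   (rep_opp (rep_scale 4 (rep_mul rs (rep_opp (rep_mul rs rc))))).
have E3 := rep_uniq (rep_eq (sigma_sq Hn) (rep_mul rs rs)) (rep_shift N0 rc).
exists N, K; eexists; eexists; split; first by rewrite /K; lia.
split; first exact: (rl ltac:(rewrite /N; lia)).
split; first exact: rr.
apply: eqK_eq; first exact: ident3_alg.
by apply: eqK_mul0l; apply: eqK_sub0; apply: eqK_sym.
Qed.


Lemma cpol_nz n : (0 < n)%N -> cpol n != 0.
Proof. by move=> Hn; rewrite -size_poly_eq0 size_cpol. Qed.

Lemma formN n : (0 < n)%N -> markov_spectrum (Some n%:R).
Proof.
move=> Hn.
exists (sigma n), (ofpoly 0), (LSopp (LSmul (sigma n) (ofpoly (cpol n)))).
have Hs2 : is_deg (LSscale 2 (ofpoly (cpol n))) (Some (n%:Z + n%:Z)).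
  have [H1 H2] := cpol_deg Hn.
  split; first by rewrite coef_LSscale mulf_neq0.
  exact: zab_scale.
have HD := is_deg_eq (ident3 Hn) (deg_mul Hs2 Hs2).
split; first by move=> [HA _]; exact: irr HA.
split.
  split; last by exists (LSscale 2 (ofpoly (cpol n))); exact: ident3.
  by case: HD => H _; eexists; exact: H.
exists ((n%:Z + n%:Z) + (n%:Z + n%:Z)), n%:Z; split; first exact: HD.
split.
  by rewrite !intrD; field.
split.
  exists 1, 0; split; first by left; rewrite oner_eq0.
  apply: is_deg_eq; first exact: eqLS_sym (ident2 _ _ _ _).
  rewrite !mulr0 subr0 mulr1.
  have := deg_mul (sigma_deg n) (deg_ofpoly (oner_neq0 {poly rat})).
  by rewrite size_poly1 /= addr0.
move=> X Y HXY.
have HP : X * X - cpol n * (Y * Y) != 0.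
  apply/eqP => HP; have [HX HY] := aniso Hn HP.
  by case: HXY; rewrite ?HX ?HY eqxx.
exists (n%:Z + ((size (X * X - cpol n * (Y * Y))).-1)%:Z); split.
  apply: is_deg_eq; first exact: eqLS_sym (ident2 _ _ _ _).
  exact: deg_mul (sigma_deg n) (deg_ofpoly HP).
lia.
Qed.

Lemma formInf : markov_spectrum None.
Proof.
exists (ofpoly 0), (ofpoly 1), (sigma 1).
have z1 : zab (ofpoly 1) 0.
  apply: zab_mono (zab_ofpoly' (leqnn (size (1 : {poly rat})))) _.
  by rewrite size_poly1.
have Ed : eqLS (LSmul (ofpoly 1) (ofpoly 1)) (disc (ofpoly 0) (ofpoly 1) (sigma 1)).
  move=> z; rewrite /disc coef_LSadd coef_LSopp coef_LSscale (@coef0_mul_l (ofpoly 0) (sigma 1)) ?mulr0 ?oppr0 ?addr0 //.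
  exact: coef_ofpoly0.
split; first by move=> [_ [_ HC]]; exact: irr HC.
split.
  split; last by exists (ofpoly 1).
  exists 0; rewrite -Ed.
  have := coef_mul_top z1 z1; rewrite addr0 => ->.
  by rewrite coef_ofpolyP coef1 mulr1 oner_neq0.
move=> k; exists 1, 0; split; first by left; rewrite oner_eq0.
move=> i _; rewrite /qval !coef_LSadd coef0_mul_l; last exact: coef_ofpoly0.
rewrite (@coef0_mul_r (ofpoly 1)) ?(@coef0_mul_r (sigma 1)) ?addr0 //.
  by apply: coef0_mul_r; exact: coef_ofpoly0.
by apply: coef0_mul_r; exact: coef_ofpoly0.
Qed.

Theorem corollary3 (v : option rat) :
  markov_spectrum v <-> (v = None \/ exists n : nat, (0 < n)%N /\ v = Some n%:R).
Proof.
split.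
  case: v => [r|]; last by left.
  move=> [A [B [C [_ [Hi Hm]]]]]; right.
  have [n [Hn ->]] := dir1 Hi Hm.
  by exists n.
case=> [->|[n [Hn ->]]]; first exact: formInf.
exact: formN.
Qed.
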